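(* There are countably infinitely many pairwise distinct quasi-varieties $\mathbb{V}$ (in the signature $(\wedge,\vee,0,1,\to)$) with $\mathbb{HA}\subseteq\mathbb{V}\subseteq\mathbb{IIL}$, where $\mathbb{HA}$ is the variety of Heyting algebras and $\mathbb{IIL}$ the quasi-variety of integral implicative lattices.
   Context: An integral implicative lattice is a bounded lattice $(L,\le,\wedge,\vee,0,1)$ with a binary operation $\to$ satisfying, for all $a,b,c$: (A1) $(a\vee b)\to c=(a\to c)\wedge(b\to c)$; (A2) $a\to(b\wedge c)=(a\to b)\wedge(a\to c)$; (A3) $a\le b$ iff $1\le a\to b$. $\mathbb{IIL}$ denotes the quasi-variety of integral implicative lattices. A Heyting algebra is a bounded lattice with $\to$ satisfying (A1)–(A3), distributivity, and (H1) $a\wedge(a\to b)\le b$, (H2) $b\le a\to(a\wedge b)$; $\mathbb{HA}$ denotes the variety of Heyting algebras, regarded as a subclass of $\mathbb{IIL}$. *)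

(* Defs.v *)
From Stdlib Require Import List.
Import ListNotations.

Record Alg : Type := mkAlg {
  car : Type;
  meet : car -> car -> car;
  join : car -> car -> car;
  bot : car;
  top : car;
  imp : car -> car -> car
}.

Definition AlgClass := Alg -> Prop.

Inductive term : Type :=
| tVar : nat -> term
| tMeet : term -> term -> term
| tJoin : term -> term -> term
| tBot : term
| tTop : term
| tImp : term -> term -> term.

Fixpoint eval (A : Alg) (v : nat -> car A) (t : term) : car A :=
  match t with
  | tVar n => v n
  | tMeet s u => meet A (eval A v s) (eval A v u)
  | tJoin s u => join A (eval A v s) (eval A v u)
  | tBot => bot A
  | tTop => top A
  | tImp s u => imp A (eval A v s) (eval A v u)
  end.

(* A quasi-identity: (s1 = t1 & ... & sk = tk) => s = t. *)
Record quasi_identity : Type := mkQI {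
  qi_hyps : list (term * term);
  qi_concl : term * term
}.

Definition satisfies (A : Alg) (q : quasi_identity) : Prop :=
  forall v : nat -> car A,
    (forall e, In e (qi_hyps q) -> eval A v (fst e) = eval A v (snd e)) ->
    eval A v (fst (qi_concl q)) = eval A v (snd (qi_concl q)).

Definition quasivariety (V : AlgClass) : Prop :=
  exists Q : quasi_identity -> Prop,
    forall A : Alg, V A <-> (forall q, Q q -> satisfies A q).

Section LatAx.
Variable A : Alg.
Local Notation "x ∧ y" := (meet A x y) (at level 40, left associativity).
Local Notation "x ∨ y" := (join A x y) (at level 50, left associativity).
Local Notation "x ⇒ y" := (imp A x y) (at level 55, right associativity).

Definition le (x y : car A) : Prop := x ∧ y = x.

Definition is_bounded_lattice : Prop :=
  (forall x y z, x ∧ (y ∧ z) = (x ∧ y) ∧ z) /\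
  (forall x y z, x ∨ (y ∨ z) = (x ∨ y) ∨ z) /\
  (forall x y, x ∧ y = y ∧ x) /\
  (forall x y, x ∨ y = y ∨ x) /\
  (forall x y, x ∧ (x ∨ y) = x) /\
  (forall x y, x ∨ (x ∧ y) = x) /\
  (forall x, x ∧ top A = x) /\
  (forall x, x ∨ bot A = x).

Definition is_distributive : Prop :=
  forall x y z, x ∧ (y ∨ z) = (x ∧ y) ∨ (x ∧ z).

Definition axA1 : Prop := forall a b c, (a ∨ b) ⇒ c = (a ⇒ c) ∧ (b ⇒ c).
Definition axA2 : Prop := forall a b c, a ⇒ (b ∧ c) = (a ⇒ b) ∧ (a ⇒ c).
Definition axA3 : Prop := forall a b, le a b <-> le (top A) (a ⇒ b).
Definition axH1 : Prop := forall a b, le (a ∧ (a ⇒ b)) b.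
Definition axH2 : Prop := forall a b, le b (a ⇒ (a ∧ b)).
End LatAx.

Definition IIL : AlgClass := fun A =>
  is_bounded_lattice A /\ axA1 A /\ axA2 A /\ axA3 A.

Definition HA : AlgClass := fun A =>
  is_bounded_lattice A /\ is_distributive A /\
  axA1 A /\ axA2 A /\ axA3 A /\ axH1 A /\ axH2 A.

Definition same_class (V W : AlgClass) : Prop := forall A, V A <-> W A.

(* Main.v *)
Require Import Defs.
From Stdlib Require Import List Arith Lia Eqdep_dec.
Import ListNotations.

Definition chT (N : nat) := {k : nat | Nat.leb k N = true}.

Lemma mk_pf (N k : nat) : Nat.leb (Nat.min k N) N = true.
Proof. apply Nat.leb_le; lia. Qed.

Definition mk (N k : nat) : chT N := exist _ (Nat.min k N) (mk_pf N k).

Lemma ch_eq (N : nat) (x y : chT N) : proj1_sig x = proj1_sig y -> x = y.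
Proof.
  destruct x as [x Hx], y as [y Hy]; simpl; intros ->.
  f_equal; apply UIP_dec; decide equality.
Qed.

Definition Ch (N : nat) : Alg :=
  mkAlg (chT N)
    (fun a b => mk N (Nat.min (proj1_sig a) (proj1_sig b)))
    (fun a b => mk N (Nat.max (proj1_sig a) (proj1_sig b)))
    (mk N 0) (mk N N)
    (fun a b => mk N (if Nat.leb (proj1_sig a) (proj1_sig b) then N else proj1_sig b - 1)).

Lemma bnd (N : nat) (x : chT N) : proj1_sig x <= N.
Proof. destruct x as [x Hx]; simpl; apply Nat.leb_le; exact Hx. Qed.

Ltac chsolve N :=
  repeat match goal with
  | x : chT N |- _ => let H := fresh in pose proof (bnd N x) as H; revert H;
                      destruct x as [x ?]; simpl; intro
  end;
  try (apply ch_eq); simpl;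
  repeat match goal with |- context [Nat.leb ?a ?b] => destruct (Nat.leb_spec a b) end;
  simpl; try lia.

Lemma Ch_IIL (N : nat) : IIL (Ch N).
Proof.
  unfold IIL, is_bounded_lattice, axA1, axA2, axA3, le; simpl.
  repeat split; intros; chsolve N.
  all: (apply (f_equal (@proj1_sig _ _)) in H; simpl in H; revert H;
    repeat match goal with |- context [Nat.leb ?a ?b] => destruct (Nat.leb_spec a b) end;
    simpl; intros; try apply ch_eq; simpl; lia).
Qed.

Fixpoint it (k : nat) : term :=
  match k with 0 => tVar 0 | S k => tImp tTop (it k) end.

Definition E (n : nat) : quasi_identity := mkQI [] (it (S n), it n).

Definition x0 := tVar 0. Definition x1 := tVar 1. Definition x2 := tVar 2.

Definition qiil : list quasi_identity := [
  mkQI [] (tMeet x0 (tMeet x1 x2), tMeet (tMeet x0 x1) x2);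
  mkQI [] (tJoin x0 (tJoin x1 x2), tJoin (tJoin x0 x1) x2);
  mkQI [] (tMeet x0 x1, tMeet x1 x0);
  mkQI [] (tJoin x0 x1, tJoin x1 x0);
  mkQI [] (tMeet x0 (tJoin x0 x1), x0);
  mkQI [] (tJoin x0 (tMeet x0 x1), x0);
  mkQI [] (tMeet x0 tTop, x0);
  mkQI [] (tJoin x0 tBot, x0);
  mkQI [] (tImp (tJoin x0 x1) x2, tMeet (tImp x0 x2) (tImp x1 x2));
  mkQI [] (tImp x0 (tMeet x1 x2), tMeet (tImp x0 x1) (tImp x0 x2));
  mkQI [(tMeet x0 x1, x0)] (tMeet tTop (tImp x0 x1), tTop);
  mkQI [(tMeet tTop (tImp x0 x1), tTop)] (tMeet x0 x1, x0)].

Definition val3 (A : Alg) (a b c : car A) : nat -> car A :=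
  fun k => match k with 0 => a | 1 => b | _ => c end.

Lemma IIL_qi (A : Alg) : IIL A <-> (forall q, In q qiil -> satisfies A q).
Proof.
  split.
  - intros (L & A1 & A2 & A3) q Hq.
    destruct L as (l1 & l2 & l3 & l4 & l5 & l6 & l7 & l8).
    unfold axA3, le in A3.
    simpl in Hq; repeat destruct Hq as [<- | Hq]; try contradiction;
      intros v Hv; simpl in *; auto.
    + apply (proj1 (A3 _ _)). apply (Hv _ (or_introl eq_refl)).
    + apply (proj2 (A3 _ _)). apply (Hv _ (or_introl eq_refl)).
  - intros H.
    assert (G : forall i q, nth_error qiil i = Some q -> forall a b c,
      (forall e, In e (qi_hyps q) -> eval A (val3 A a b c) (fst e) = eval A (val3 A a b c) (snd e)) ->
      eval A (val3 A a b c) (fst (qi_concl q)) = eval A (val3 A a b c) (snd (qi_concl q))).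
    { intros i q Hi a b c; apply H. eapply nth_error_In; eauto. }
    unfold IIL, is_bounded_lattice, axA1, axA2, axA3, le.
    repeat split; intros.
    + exact (G 0 _ eq_refl x y z ltac:(simpl; tauto)).
    + exact (G 1 _ eq_refl x y z ltac:(simpl; tauto)).
    + exact (G 2 _ eq_refl x y x ltac:(simpl; tauto)).
    + exact (G 3 _ eq_refl x y x ltac:(simpl; tauto)).
    + exact (G 4 _ eq_refl x y x ltac:(simpl; tauto)).
    + exact (G 5 _ eq_refl x y x ltac:(simpl; tauto)).
    + exact (G 6 _ eq_refl x x x ltac:(simpl; tauto)).
    + exact (G 7 _ eq_refl x x x ltac:(simpl; tauto)).
    + exact (G 8 _ eq_refl a b c ltac:(simpl; tauto)).
    + exact (G 9 _ eq_refl a b c ltac:(simpl; tauto)).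
    + apply (G 10 _ eq_refl a b a). simpl. intros e [<- | []]. assumption.
    + apply (G 11 _ eq_refl a b a). simpl. intros e [<- | []]. assumption.
Qed.

Definition V (n : nat) : AlgClass := fun A => IIL A /\ satisfies A (E n).

Lemma V_qv n : quasivariety (V n).
Proof.
  exists (fun q => In q qiil \/ q = E n). intros A; unfold V; rewrite IIL_qi.
  split.
  - intros [H1 H2] q [Hq | ->]; auto.
  - intros H; split; auto.
Qed.

Lemma HA_top_imp (A : Alg) : HA A -> forall x, imp A (top A) x = x.
Proof.
  intros (L & D & A1 & A2 & A3 & H1 & H2) x.
  destruct L as (l1 & l2 & l3 & l4 & l5 & l6 & l7 & l8).
  unfold axH1, axH2, le in *.
  specialize (H1 (top A) x). specialize (H2 (top A) x).
  rewrite (l3 (top A)), l7 in H1, H2.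
  rewrite <- H1. rewrite l3. exact H2.
Qed.

Lemma HA_V n A : HA A -> V n A.
Proof.
  intros H. split.
  - destruct H as (L & D & A1 & A2 & A3 & _). exact (conj L (conj A1 (conj A2 A3))).
  - intros v _. simpl. apply HA_top_imp; auto.
Qed.

Lemma Ch_it N k (v : nat -> car (Ch N)) :
  proj1_sig (eval (Ch N) v (it k)) =
  if Nat.eqb (proj1_sig (v 0)) N then N else proj1_sig (v 0) - k.
Proof.
  pose proof (bnd N (v 0)) as B.
  induction k; simpl.
  - destruct (Nat.eqb_spec (proj1_sig (v 0)) N); lia.
  - rewrite IHk. destruct (Nat.eqb_spec (proj1_sig (v 0)) N);
    repeat match goal with |- context [Nat.leb ?a ?b] => destruct (Nat.leb_spec a b) end; lia.
Qed.

Lemma Ch_E N n : satisfies (Ch N) (E n) <-> N <= S n.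
Proof.
  split.
  - intros H. destruct (Nat.le_gt_cases N (S n)) as [|Hl]; auto.
    specialize (H (fun _ => mk N (N - 1)) ltac:(simpl; tauto)).
    apply (f_equal (@proj1_sig _ _)) in H. cbn [fst snd qi_concl E] in H.
    rewrite !Ch_it in H. simpl in H.
    destruct (Nat.eqb_spec (Nat.min (N - 1) N) N); lia.
  - intros Hl v _. apply ch_eq. cbn [fst snd qi_concl E]. rewrite !Ch_it.
    pose proof (bnd N (v 0)).
    destruct (Nat.eqb_spec (proj1_sig (v 0)) N); lia.
Qed.

Theorem lemma2p3 :
  exists V : nat -> AlgClass,
    (forall n, quasivariety (V n)) /\
    (forall n A, HA A -> V n A) /\
    (forall n A, V n A -> IIL A) /\
    (forall m n, m <> n -> ~ same_class (V m) (V n)).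
Proof.
  exists V. split; [exact V_qv|]. split; [exact HA_V|]. split; [intros n A []; auto|].
  assert (K : forall m n, m < n -> ~ same_class (V m) (V n)).
  { intros m n Hmn SC. specialize (SC (Ch (S n))).
    assert (Hn : V n (Ch (S n))) by (split; [apply Ch_IIL | apply Ch_E; lia]).
    apply SC in Hn. destruct Hn as [_ Hm]. apply Ch_E in Hm. lia. }
  intros m n Hmn SC. destruct (Nat.lt_gt_cases m n) as [[Hl|Hl] _]; auto.
  - exact (K _ _ Hl SC).
  - apply (K _ _ Hl). intros A; symmetry; apply SC.
Qed.
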